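(* Let $t=t(z)$ denote the unique formal power series in $z$ (in fact a power series in $z^3$) with zero constant term satisfying $z^3=t(1-t)^2$; thus $t=z^3+2z^6+\cdots$. Then for every $k\ge 0$, \[ f_k(z)=\frac{t^k}{z^k(1-t)}\qquad\text{and}\qquad g_k(z)=\frac{t^{k+1}}{z^{k+2}}, \] where the right-hand sides are interpreted as formal power series in $z$ (they are, since $t/z^3$ is a power series with constant term $1$).
   Context: An S-Motzkin path is a lattice path from $(0,0)$ using up steps $u=(1,1)$, horizontal steps $h=(1,0)$ and down steps $d=(1,-1)$, never going below the $x$-axis, ending on the $x$-axis, such that after deleting the down steps the remaining word is $huhu\cdots hu$. Partial S-Motzkin paths are their prefixes. The numbers $a_{n,k}$ (resp. $b_{n,k}$), $n,k\ge0$, count partial S-Motzkin paths of length $n$ ending at height $k$ whose last non-down step is an up step (resp. a horizontal step); equivalently they are defined by $a_{0,0}=1$, $b_{0,0}=0$, $a_{0,k}=b_{0,k}=0$ for $k\ge1$, and for $n\ge1$, $k\ge0$: $a_{n,k}=b_{n-1,k-1}+a_{n-1,k+1}$, $b_{n,k}=a_{n-1,k}+b_{n-1,k+1}$, with $b_{n-1,-1}=0$. Generating functions: $f_k(z)=\sum_{n\ge0}a_{n,k}z^n$, $g_k(z)=\sum_{n\ge0}b_{n,k}z^n$. *)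

(* Defs.v *)
(* Formal power series in z with rational coefficients are
   represented by their coefficient sequences  nat -> rat. *)
From mathcomp Require Import all_boot all_order all_algebra.
Set Implicit Arguments. Unset Strict Implicit. Unset Printing Implicit Defensive.
Import Order.TTheory GRing.Theory Num.Theory.
Local Open Scope ring_scope.

Definition series := nat -> rat.

Definition sone : series := fun n => (n == 0%N)%:R.
Definition sX (m : nat) : series := fun n => (n == m)%:R.
Definition ssub (s u : series) : series := fun n => s n - u n.
Definition smul (s u : series) : series :=
  fun n => \sum_(i < n.+1) s i * u (n - i)%N.
Definition spow (s : series) (k : nat) : series := iter k (smul s) sone.
(* division by z^m of a series whose first m coefficients vanish *)
Definition shift (m : nat) (s : series) : series := fun n => s (n + m)%N.
(* 1/(1-t) for a series t with zero constant term: sum_j t^j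
   (coefficient n only gets contributions from j <= n). *)
Definition inv1m (t : series) : series :=
  fun n => \sum_(j < n.+1) spow t j n.

(* the numbers a_{n,k}, b_{n,k} via the recursion of the paper:
   ab n = (fun k => a_{n,k}, fun k => b_{n,k}) *)
Fixpoint ab (n : nat) : (nat -> nat) * (nat -> nat) :=
  match n with
  | 0 => (fun k => nat_of_bool (k == 0%N), fun _ => 0%N)
  | n'.+1 =>
      let a := (ab n').1 in let b := (ab n').2 in
      (fun k => ((if k is k'.+1 then b k' else 0%N) + a k.+1)%N,
       fun k => (a k + b k.+1)%N)
  end.

Definition a_nk (n k : nat) : nat := (ab n).1 k.
Definition b_nk (n k : nat) : nat := (ab n).2 k.

Definition f_ (k : nat) : series := fun n => (a_nk n k)%:R.
Definition g_ (k : nat) : series := fun n => (b_nk n k)%:R.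

(* Main.v *)
Require Import Defs.
From mathcomp Require Import all_boot all_order all_algebra.
From mathcomp Require Import ring zify.
Import GRing.Theory.
Local Open Scope ring_scope.


Definition eqm (N : nat) (p q : {poly rat}) := forall i, (i < N)%N -> p`_i = q`_i.

Lemma eqm_refl N p : eqm N p p. Proof. by []. Qed.
Lemma eqm_sym N p q : eqm N p q -> eqm N q p.
Proof. by move=> H i Hi; rewrite H. Qed.
Lemma eqm_trans N p q r : eqm N p q -> eqm N q r -> eqm N p r.
Proof. by move=> H1 H2 i Hi; rewrite H1 ?H2. Qed.
Lemma eqm_le M N p q : (N <= M)%N -> eqm M p q -> eqm N p q.
Proof. move=> Hle H i Hi; apply: H; lia. Qed.
Lemma eqmD N p p' q q' : eqm N p p' -> eqm N q q' -> eqm N (p + q) (p' + q').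
Proof. by move=> H1 H2 i Hi; rewrite !coefD H1 ?H2. Qed.
Lemma eqmB N p p' q q' : eqm N p p' -> eqm N q q' -> eqm N (p - q) (p' - q').
Proof. by move=> H1 H2 i Hi; rewrite !coefB H1 ?H2. Qed.
Lemma eqmM N p p' q q' : eqm N p p' -> eqm N q q' -> eqm N (p * q) (p' * q').
Proof.
move=> H1 H2 i Hi; rewrite !coefM; apply: eq_bigr => j _.
have Hj := ltn_ord j.
rewrite H1; last lia. rewrite H2 //; lia.
Qed.
Lemma eqmX N p q k : eqm N p q -> eqm N (p ^+ k) (q ^+ k).
Proof. move=> H; elim: k => [|k IH]; first exact: eqm_refl.
by rewrite !exprS; apply: eqmM. Qed.
Lemma eqm_ring N p q p' q' : eqm N p' q' -> p = p' -> q = q' -> eqm N p q.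
Proof. by move=> H -> ->. Qed.
Lemma eqm_ex j p q : eqm j p q -> exists r, p - q = 'X^j * r.
Proof.
move=> H; exists (drop_poly j (p - q)); apply/polyP => i.
rewrite coefXnM coef_drop_poly; case: ltnP => Hi.
  by rewrite coefB H // subrr.
by rewrite subnK.
Qed.
Lemma ex_eqm j p q r : p - q = 'X^j * r -> eqm j p q.
Proof.
move=> H i Hi; apply/eqP; rewrite -subr_eq0 -coefB H coefXnM Hi //.
Qed.
Lemma eqm_MXn N k p q : eqm N p q -> eqm (N + k) ('X^k * p) ('X^k * q).
Proof.
move=> H i Hi; rewrite !coefXnM; case: ltnP => Hik //; apply: H; lia.
Qed.
Lemma eqm_dropX m L p q : eqm (L + m) ('X^m * p) ('X^m * q) -> eqm L p q.
Proof.
move=> H i Hi; have := H (i + m)%N; rewrite !coefXnM.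
have -> : (i + m < m)%N = false by lia.
rewrite addnK; apply; lia.
Qed.

Arguments eqm_sym {N p q}.
Arguments eqm_trans {N p q r}.
Arguments eqm_le {M N p q}.
Arguments eqmD {N p p' q q'}.
Arguments eqmB {N p p' q q'}.
Arguments eqmM {N p p' q q'}.
Arguments eqmX {N p q} k.
Arguments eqm_ring {N p q p' q'}.
Arguments eqm_ex {j p q}.
Arguments ex_eqm {j p q r}.
Arguments eqm_MXn {N} k {p q}.
Arguments eqm_dropX {m L p q}.

Definition Ps N (s : series) : {poly rat} := \poly_(i < N) s i.
Lemma PsE N s i : (i < N)%N -> (Ps N s)`_i = s i.
Proof. by rewrite coef_poly => ->. Qed.
Lemma Ps_le M N s : (N <= M)%N -> eqm N (Ps M s) (Ps N s).
Proof. move=> H i Hi; rewrite !PsE //; lia. Qed.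
Lemma Ps_ext N s u : s =1 u -> Ps N s = Ps N u.
Proof. by move=> H; apply: eq_poly => i _. Qed.
Lemma Ps_mul N s u : eqm N (Ps N (smul s u)) (Ps N s * Ps N u).
Proof.
move=> i Hi; rewrite PsE // coefM /smul; apply: eq_bigr => j _.
have Hj := ltn_ord j.
rewrite !PsE //; lia.
Qed.
Lemma Ps_sub N s u : eqm N (Ps N (ssub s u)) (Ps N s - Ps N u).
Proof. by move=> i Hi; rewrite coefB !PsE. Qed.
Lemma Ps_one N : eqm N (Ps N sone) 1.
Proof. by move=> i Hi; rewrite coef1 !PsE. Qed.
Lemma Ps_X N m : eqm N (Ps N (sX m)) 'X^m.
Proof. by move=> i Hi; rewrite coefXn !PsE. Qed.
Lemma Ps_pow N s k : eqm N (Ps N (spow s k)) (Ps N s ^+ k).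
Proof.
elim: k => [|k IH]; first exact: Ps_one.
rewrite exprS; apply: eqm_trans (Ps_mul _ _ _) _; exact: eqmM.
Qed.
Lemma Ps_shift k N s p : eqm (N + k) (Ps (N + k) s) ('X^k * p) ->
  eqm N (Ps N (shift k s)) p.
Proof.
move=> H i Hi; rewrite PsE // /shift.
have := H (i + k)%N; rewrite PsE; last lia.
rewrite coefXnM.
have -> : (i + k < k)%N = false by lia.
rewrite addnK; apply; lia.
Qed.
Lemma coef_Ps n s : s n = (Ps n.+1 s)`_n.
Proof. by rewrite PsE. Qed.
Lemma series_eq s u : (forall N, eqm N (Ps N s) (Ps N u)) -> s =1 u.
Proof. by move=> H n; rewrite (coef_Ps n s) (coef_Ps n u); apply: H. Qed.



Arguments Ps_shift k {N s p}.
Arguments Ps_ext N {s u}.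


Lemma a_S n k : a_nk n.+1 k = ((if k is k'.+1 then b_nk n k' else 0) + a_nk n k.+1)%N.
Proof. by []. Qed.
Lemma b_S n k : b_nk n.+1 k = (a_nk n k + b_nk n k.+1)%N.
Proof. by []. Qed.
Lemma a_0 k : a_nk 0 k = (k == 0%N). Proof. by []. Qed.
Lemma b_0 k : b_nk 0 k = 0%N. Proof. by []. Qed.

Lemma coef1X n (p : {poly rat}) : (1 + 'X * p)`_n = (n == 0%N)%:R + (if n is n'.+1 then p`_n' else 0).
Proof. by rewrite coefD coef1 coefXM; case: n. Qed.
Lemma coefX' n (p : {poly rat}) : ('X * p)`_n = (if n is n'.+1 then p`_n' else 0).
Proof. by rewrite coefXM; case: n. Qed.

Lemma uniq_rec (F G : nat -> series) :
 (forall N, eqm N (Ps N (F 0%N)) (1 + 'X * Ps N (F 1%N))) ->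
 (forall N k, eqm N (Ps N (F k.+1)) ('X * (Ps N (G k) + Ps N (F k.+2)))) ->
 (forall N k, eqm N (Ps N (G k)) ('X * (Ps N (F k) + Ps N (G k.+1)))) ->
 forall n k, f_ k n = F k n /\ g_ k n = G k n.
Proof.
move=> H0 H1 H2.
have c0 n : F 0%N n = (n == 0%N)%:R + (if n is n'.+1 then F 1%N n' else 0).
  rewrite (coef_Ps n (F 0%N)) H0 // coef1X; case: n => // n; rewrite PsE //.
have c1 n k : F k.+1 n = (if n is n'.+1 then G k n' + F k.+2 n' else 0).
  rewrite (coef_Ps n (F k.+1)) H1 // coefX'; case: n => // n; rewrite coefD !PsE //.
have c2 n k : G k n = (if n is n'.+1 then F k n' + G k.+1 n' else 0).
  rewrite (coef_Ps n (G k)) H2 // coefX'; case: n => // n; rewrite coefD !PsE //.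
elim=> [|n IH] k.
  rewrite /f_ /g_ a_0 b_0 c2; case: k => [|k]; first by rewrite c0.
  by rewrite c1.
rewrite /f_ /g_ a_S b_S !natrD c2; split.
  case: k => [|k]; first by rewrite c0 /= -(proj1 (IH 1%N)).
  by rewrite c1 -(proj2 (IH k)) -(proj1 (IH k.+2)).
by rewrite -(proj1 (IH k)) -(proj2 (IH k.+1)).
Qed.


Lemma smul0 s u : smul s u 0%N = s 0%N * u 0%N.
Proof. by rewrite /smul big_ord1. Qed.

Lemma t1 t : t 0%N = 0 -> sX 3 =1 smul t (spow (ssub sone t) 2) -> t 1%N = 0.
Proof.
move=> h0 heq; have := heq 1%N.
rewrite /smul big_ord_recr big_ord1 /= h0 mul0r add0r.
rewrite -/(smul _ _) /spow /= !smul0 /ssub /sone /= h0 subr0 !mulr1.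
by move=> <-.
Qed.

Definition Vp t L := Ps L (shift 2 t).
Definition Ip t L := Ps L (inv1m t).

Lemma FT t L : t 0%N = 0 -> t 1%N = 0 -> eqm L (Ps L t) ('X^2 * Vp t L).
Proof.
move=> h0 h1 i Hi; rewrite PsE // coefXnM; case: ltnP => H2.
  by case: i Hi H2 => [|[|i]].
rewrite PsE /shift ?subnK //; lia.
Qed.

Lemma FB t L : t 0%N = 0 -> sX 3 =1 smul t (spow (ssub sone t) 2) ->
  eqm L 'X (Vp t L * (1 - 'X^2 * Vp t L) ^+ 2).
Proof.
move=> h0 heq; have h1 := t1 _ h0 heq.
have h : eqm (L + 2) ('X^2 * 'X) ('X^2 * (Vp t (L + 2) * (1 - 'X^2 * Vp t (L + 2)) ^+ 2)).
  rewrite -exprSr.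
  apply: eqm_trans (eqm_sym (Ps_X _ 3)) _.
  rewrite (Ps_ext _ heq).
  apply: eqm_trans (Ps_mul _ _ _) _.
  apply: eqm_ring (eqmM (FT _ _ h0 h1) (eqm_trans (Ps_pow _ _ 2) (eqmX 2 (eqm_trans (Ps_sub _ _ _)
     (eqmB (Ps_one _) (FT _ _ h0 h1)))))) _ _ => //.
  by rewrite mulrA.
have := eqm_dropX h.
move=> h'; apply: eqm_trans h' _.
apply: eqmM; first by apply: Ps_le; lia.
apply: eqmX; apply: eqmB => //; apply: eqmM => //; apply: Ps_le; lia.
Qed.

Lemma XnV (V : {poly rat}) j i : (i < j)%N -> (('X^2 * V) ^+ j)`_i = 0.
Proof.
move=> H; rewrite exprMn -exprM coefXnM.
have -> : (i < 2 * j)%N by lia.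
by [].
Qed.

Lemma FA t L : t 0%N = 0 -> t 1%N = 0 ->
  eqm L ((1 - 'X^2 * Vp t L) * Ip t L) 1.
Proof.
move=> h0 h1.
set S := 'X^2 * Vp t L.
have s1 : eqm L (Ip t L) (\sum_(j < L) S ^+ j).
  move=> i Hi; rewrite PsE // /inv1m coef_sum.
  rewrite (big_ord_widen L (fun j => spow t j i)) //.
  rewrite [RHS](bigID (fun j : 'I_L => (j < i.+1)%N)) /=.
  rewrite [X in _ = _ + X]big1 ?addr0.
    apply: eq_bigr => j Hj.
    rewrite -(PsE L (spow t j) i Hi); apply: (eqm_trans (Ps_pow L t j) (eqmX j (FT t L h0 h1))) Hi.
  move=> j; rewrite -leqNgt => Hj; apply: XnV; lia.
have s2 : (1 - S) * \sum_(j < L) S ^+ j = 1 - S ^+ L.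
  by rewrite -[1 - S]opprB mulNr -subrX1 opprB.
apply: eqm_trans (eqmM (eqm_refl _ _) s1) _.
rewrite s2 => i Hi; by rewrite coefB XnV // subr0.
Qed.


Definition Fs t k : series := smul (shift k (spow t k)) (inv1m t).
Definition Gs t k : series := shift (k + 2) (spow t k.+1).

Lemma PsF t N k : t 0%N = 0 -> t 1%N = 0 ->
  eqm N (Ps N (Fs t k)) (('X * Vp t N) ^+ k * Ip t N).
Proof.
move=> h0 h1.
apply: eqm_trans (Ps_mul _ _ _) _; apply: eqmM => //.
apply: (Ps_shift k).
apply: eqm_trans (Ps_pow _ _ _) _.
apply: eqm_trans (eqmX k (FT t (N + k) h0 h1)) _.
have -> : ('X^2 * Vp t (N + k)) ^+ k = 'X^k * ('X * Vp t (N + k)) ^+ k.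
  by rewrite !exprMn mulrA.
apply: eqm_MXn; apply: eqmX; apply: eqmM => //; apply: Ps_le; lia.
Qed.

Lemma PsG t N k : t 0%N = 0 -> t 1%N = 0 ->
  eqm N (Ps N (Gs t k)) ('X^k * Vp t N ^+ k.+1).
Proof.
move=> h0 h1.
apply: (Ps_shift (k + 2)).
apply: eqm_trans (Ps_pow _ _ _) _.
apply: eqm_trans (eqmX k.+1 (FT t _ h0 h1)) _.
have -> : ('X^2 * Vp t (N + (k + 2))) ^+ k.+1 = 'X^(k + 2) * ('X^k * Vp t (N + (k + 2)) ^+ k.+1).
  rewrite exprMn -exprM mulrA -exprD; congr (_ ^+ _ * _); lia.
apply: eqm_MXn; apply: eqmM => //; apply: eqmX; apply: Ps_le; lia.
Qed.


Lemma Key1 t N : t 0%N = 0 -> t 1%N = 0 ->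
  eqm N (Ip t N) (1 + 'X^2 * Vp t N * Ip t N).
Proof.
move=> h0 h1.
apply: (eqm_ring (eqmD (FA t N h0 h1) (eqm_refl _ ('X^2 * Vp t N * Ip t N)))); ring.
Qed.

Lemma Key2 t N : t 0%N = 0 -> sX 3 =1 smul t (spow (ssub sone t) 2) ->
  eqm N (Vp t N) ('X * Ip t N + 'X^2 * Vp t N ^+ 2).
Proof.
move=> h0 heq; have h1 := t1 _ h0 heq.
set V := Vp t N; set I := Ip t N.
have a : eqm N ('X * I) (V * (1 - 'X^2 * V) * ((1 - 'X^2 * V) * I)).
  apply: (eqm_ring (eqmM (FB t N h0 heq) (eqm_refl _ I))) => //; rewrite /V; ring.
have b : eqm N (V * (1 - 'X^2 * V) * ((1 - 'X^2 * V) * I)) (V * (1 - 'X^2 * V) * 1).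
  exact: eqmM (eqm_refl _ _) (FA t N h0 h1).
apply: (eqm_ring (eqmD (eqm_sym (eqm_trans a b)) (eqm_refl _ ('X^2 * V ^+ 2)))); ring.
Qed.

Lemma R0 t N : t 0%N = 0 -> t 1%N = 0 ->
  eqm N (Ps N (Fs t 0)) (1 + 'X * Ps N (Fs t 1)).
Proof.
move=> h0 h1.
apply: eqm_trans (PsF t N 0 h0 h1) _.
apply: eqm_trans _ (eqm_sym (eqmD (eqm_refl _ 1) (eqmM (eqm_refl _ 'X) (PsF t N 1 h0 h1)))).
apply: (eqm_ring (Key1 t N h0 h1)); ring.
Qed.

Lemma R1 t N k : t 0%N = 0 -> t 1%N = 0 ->
  eqm N (Ps N (Fs t k.+1)) ('X * (Ps N (Gs t k) + Ps N (Fs t k.+2))).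
Proof.
move=> h0 h1.
apply: eqm_trans (PsF t N k.+1 h0 h1) _.
apply: eqm_trans _ (eqm_sym (eqmM (eqm_refl _ 'X) (eqmD (PsG t N k h0 h1) (PsF t N k.+2 h0 h1)))).
apply: (eqm_ring (eqmM (eqm_refl _ (('X * Vp t N) ^+ k.+1)) (Key1 t N h0 h1))) => //.
rewrite !exprS !exprMn; move: ('X ^+ k) (Vp t N ^+ k) => a b; ring.
Qed.

Lemma RG t N k : t 0%N = 0 -> sX 3 =1 smul t (spow (ssub sone t) 2) ->
  eqm N (Ps N (Gs t k)) ('X * (Ps N (Fs t k) + Ps N (Gs t k.+1))).
Proof.
move=> h0 heq; have h1 := t1 _ h0 heq.
apply: eqm_trans (PsG t N k h0 h1) _.
apply: eqm_trans _ (eqm_sym (eqmM (eqm_refl _ 'X) (eqmD (PsF t N k h0 h1) (PsG t N k.+1 h0 h1)))).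
apply: (eqm_ring (eqmM (eqm_refl _ ('X ^+ k * Vp t N ^+ k)) (Key2 t N h0 heq))).
  by rewrite exprSr mulrA.
rewrite !exprS !exprMn; move: ('X ^+ k) (Vp t N ^+ k) (Ip t N) => a b c; ring.
Qed.


Fixpoint pp (m : nat) : {poly rat} :=
  if m is m'.+1 then 'X^3 + 2 * pp m' ^+ 2 - pp m' ^+ 3 else 0.

Lemma pp_S m : pp m.+1 = 'X^3 + 2 * pp m ^+ 2 - pp m ^+ 3.
Proof. by []. Qed.

Lemma pp_X m : exists a, pp m = 'X * a.
Proof.
elim: m => [|m [a ha]]; first by exists 0; rewrite mulr0.
exists ('X^2 + 2 * 'X * a ^+ 2 - 'X^2 * a ^+ 3); rewrite pp_S ha; ring.
Qed.

Lemma contract j (p q a b r : {poly rat}) : p = 'X * a -> q = 'X * b -> p - q = 'X^j * r ->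
  ('X^3 + 2 * p ^+ 2 - p ^+ 3) - ('X^3 + 2 * q ^+ 2 - q ^+ 3) =
  'X^(j.+1) * (r * (2 * (a + b) - 'X * (a ^+ 2 + a * b + b ^+ 2))).
Proof.
move=> hp hq hr.
transitivity ((p - q) * ('X * (2 * (a + b) - 'X * (a ^+ 2 + a * b + b ^+ 2)))).
  rewrite hp hq; ring.
rewrite hr (exprSr 'X j); move: ('X^j) => c; ring.
Qed.

Lemma pp_step m : eqm m (pp m.+1) (pp m).
Proof.
elim: m => [|m IH]; first by move=> i.
have [r hr] := eqm_ex IH.
have [a ha] := pp_X m.+1.
have [b hb] := pp_X m.
exact (ex_eqm (contract _ _ _ _ _ _ ha hb hr)).
Qed.

Lemma pp_chain m m' : (m <= m')%N -> eqm m (pp m') (pp m).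
Proof.
elim: m' => [|m' IH] Hle.
  by have -> : m = 0%N by lia.
case: (leqP m m') => H.
  apply: eqm_trans _ (IH H).
  apply: eqm_le (pp_step m') => //.
by have -> : m = m'.+1 by lia.
Qed.

Definition tt0 : series := fun n => (pp n.+1)`_n.

Lemma Ps_tt N : eqm N (Ps N tt0) (pp N).
Proof.
move=> i Hi; rewrite PsE // /tt0.
symmetry; exact: (pp_chain i.+1 N Hi) i (ltnSn i).
Qed.

Lemma exists_t : exists t : series, t 0%N = 0 /\ sX 3 =1 smul t (spow (ssub sone t) 2).
Proof.
exists tt0; split.
  rewrite /tt0; have [a ->] := pp_X 1.
  by rewrite coefXM.
apply: series_eq => N.
apply: eqm_trans (Ps_X _ _) _.
apply: eqm_trans _ (eqm_sym (Ps_mul _ _ _)).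
apply: eqm_trans _ (eqm_sym (eqmM (eqm_refl _ _) (Ps_pow _ _ 2))).
apply: eqm_trans _ (eqm_sym (eqmM (Ps_tt N) (eqmX 2 (eqm_trans (Ps_sub _ _ _)
     (eqmB (Ps_one _) (Ps_tt N)))))).
apply: (eqm_ring (eqm_sym (eqmB (eqm_refl _ ('X^3 + pp N)) (pp_step N)))).
  ring.
rewrite pp_S; ring.
Qed.


Theorem mainTheorem1 :
  (exists t : series, t 0%N = 0 /\ sX 3 =1 smul t (spow (ssub sone t) 2)) /\
  (forall t : series, t 0%N = 0 -> sX 3 =1 smul t (spow (ssub sone t) 2) ->
    forall k : nat,
      f_ k =1 smul (shift k (spow t k)) (inv1m t) /\
      g_ k =1 shift (k + 2) (spow t k.+1)).
Proof.
split; first exact: exists_t.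
move=> t h0 heq k.
have h1 := t1 _ h0 heq.
have U := uniq_rec (Fs t) (Gs t) (fun N => R0 t N h0 h1) (fun N k => R1 t N k h0 h1)
  (fun N k => RG t N k h0 heq).
by split => n; [exact: (proj1 (U n k)) | exact: (proj2 (U n k))].
Qed.
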